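(* Fix $\lambda\ge0$ and let $(p^t)_{t\ge0}$ be the iterates of the Blahut–Arimoto iteration. Then for every $t\ge0$ and every $p\in\Delta_n$, $$\chi(p)-\lambda s^Tp-f_\lambda(p^{t+1},p^t)\le\sum_xp_x\ln\frac{p^{t+1}_x}{p^t_x}.$$
   Context: Setup: integers $n\ge 1$, $m\ge1$; density matrices $\rho_1,\dots,\rho_n\in\mathcal{D}^m$ ($m\times m$ complex positive semidefinite, trace one); $\Delta_n$ the probability simplex in $\mathbb{R}^n$; $s\in\mathbb{R}^n$, $s\ge0$; $\lambda\ge0$. All logarithms are natural; matrix logarithms of positive semidefinite matrices are taken on their support, convention $0\ln0=0$. For $p\in\Delta_n$, $\rho_p=\sum_xp_x\rho_x$, $H(\rho)=-\operatorname{Tr}[\rho\ln\rho]$, $\chi(p)=H(\rho_p)-\sum_xp_xH(\rho_x)$. For $p,p'\in\Delta_n$, $$f_\lambda(p,p')=\sum_x p_x\ln\frac{p'_x}{p_x}+\sum_x p_x\operatorname{Tr}[\rho_x(\ln\rho_x-\ln\rho_{p'})]-\lambda s^Tp$$ (terms with $p_x=0$ are zero; value $-\infty$ if $p_x>0=p'_x$ for some $x$). Blahut–Arimoto iteration: $p^0_x=1/n$ for all $x$; given $p^t$ with positive entries, set $\rho^t=\rho_{p^t}$, $r^t_x=\exp\big(\ln p^t_x+\operatorname{Tr}[\rho_x\ln\rho_x]-\operatorname{Tr}[\rho_x\ln\rho^t]-\lambda s_x\big)$ and $p^{t+1}_x=r^t_x/\sum_yr^t_y$. *)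

(* Defs.v *)
(* Stdlib reals; complex numbers as pairs of reals;
   m x m complex matrices as functions nat -> nat -> C (indices < m). *)
From Stdlib Require Import Reals Classical ClassicalEpsilon.
Open Scope R_scope.

Record C := mkC { Re : R; Im : R }.
Definition C0 : C := mkC 0 0.
Definition C1 : C := mkC 1 0.
Definition RtoC (a : R) : C := mkC a 0.
Definition Cadd (z w : C) : C := mkC (Re z + Re w) (Im z + Im w).
Definition Cmul (z w : C) : C :=
  mkC (Re z * Re w - Im z * Im w) (Re z * Im w + Im z * Re w).
Definition Cconj (z : C) : C := mkC (Re z) (- Im z).

Fixpoint rsum (k : nat) (f : nat -> R) : R :=
  match k with O => 0 | S k' => rsum k' f + f k' end.
Fixpoint csum (k : nat) (f : nat -> C) : C :=
  match k with O => C0 | S k' => Cadd (csum k' f) (f k') end.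

Definition Mat := nat -> nat -> C.
Definition Vec := nat -> C.

Definition mtrace (m : nat) (A : Mat) : C := csum m (fun i => A i i).
Definition mmul (m : nat) (A B : Mat) : Mat :=
  fun i j => csum m (fun k => Cmul (A i k) (B k j)).
Definition inner (m : nat) (v w : Vec) : C :=
  csum m (fun i => Cmul (Cconj (v i)) (w i)).

Definition psd (m : nat) (A : Mat) : Prop :=
  forall v : Vec,
    let q := inner m v (fun i => csum m (fun j => Cmul (A i j) (v j))) in
    Im q = 0 /\ 0 <= Re q.

Definition density (m : nat) (rho : Mat) : Prop :=
  psd m rho /\ mtrace m rho = C1.

Definition spectral_decomp (m : nat) (A : Mat) (mu : nat -> R) (v : nat -> Vec)
  : Prop :=
  (forall k l, (k < m)%nat -> (l < m)%nat ->
     inner m (v k) (v l) = if Nat.eqb k l then C1 else C0) /\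
  (forall i j, (i < m)%nat -> (j < m)%nat ->
     A i j = csum m (fun k => Cmul (RtoC (mu k)) (Cmul (v k i) (Cconj (v k j))))).

(* matrix logarithm taken on the support: sum over eigenvalues mu_k > 0 of
   ln(mu_k) v_k v_k^*, using (any) spectral decomposition; the result does not
   depend on the chosen decomposition. Junk value 0 if none exists. *)
Definition mlog (m : nat) (A : Mat) : Mat :=
  match excluded_middle_informative
          (exists d : (nat -> R) * (nat -> Vec), spectral_decomp m A (fst d) (snd d))
  with
  | left H =>
      let d := proj1_sig (constructive_indefinite_description _ H) in
      fun i j => csum m (fun k =>
        if Rlt_dec 0 (fst d k)
        then Cmul (RtoC (ln (fst d k))) (Cmul (snd d k i) (Cconj (snd d k j)))
        else C0)
  | right _ => fun _ _ => C0
  end.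

(* Tr[A ln B] (real part; it is real for Hermitian A, B) *)
Definition trlog (m : nat) (A B : Mat) : R := Re (mtrace m (mmul m A (mlog m B))).

Definition entropy (m : nat) (rho : Mat) : R := - trlog m rho rho.

Definition simplex (n : nat) (p : nat -> R) : Prop :=
  (forall x, (x < n)%nat -> 0 <= p x) /\ rsum n p = 1.

Definition rho_of (n m : nat) (rhos : nat -> Mat) (p : nat -> R) : Mat :=
  fun i j => csum n (fun x => Cmul (RtoC (p x)) (rhos x i j)).

Definition chi (n m : nat) (rhos : nat -> Mat) (p : nat -> R) : R :=
  entropy m (rho_of n m rhos p) - rsum n (fun x => p x * entropy m (rhos x)).

(* f_lambda(p,p'); terms with p_x = 0 are zero.  The value -infinity (case
   p_x > 0 = p'_x) is not represented. *)
Definition f_lambda (n m : nat) (rhos : nat -> Mat) (s : nat -> R) (lam : R)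
  (p p' : nat -> R) : R :=
  rsum n (fun x => if Req_EM_T (p x) 0 then 0 else
            p x * ln (p' x / p x)
            + p x * (trlog m (rhos x) (rhos x) - trlog m (rhos x) (rho_of n m rhos p')))
  - lam * rsum n (fun x => s x * p x).

Fixpoint BA (n m : nat) (rhos : nat -> Mat) (s : nat -> R) (lam : R) (t : nat)
  : nat -> R :=
  match t with
  | O => fun _ => 1 / INR n
  | S t' =>
      let pt := BA n m rhos s lam t' in
      let r := fun x => exp (ln (pt x) + trlog m (rhos x) (rhos x)
                             - trlog m (rhos x) (rho_of n m rhos pt) - lam * s x) in
      fun x => r x / rsum n r
  end.

(* Main.v *)
Require Import Defs.
From Stdlib Require Import Reals Classical ClassicalEpsilon Lra Psatz.
From HB Require Import structures.
From mathcomp Require Import all_boot all_order all_algebra.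
From mathcomp Require Import complex.
From mathcomp Require Import Rstruct.
From mathcomp Require Import ring.
Import Order.TTheory GRing.Theory Num.Theory Num.Def.
Local Open Scope ring_scope.
Definition cc (z : Defs.C) : R[i] := Complex (Defs.Re z) (Defs.Im z).
Definition uc (z : R[i]) : Defs.C := Defs.mkC (complex.Re z) (complex.Im z).

Lemma ccK z : cc (uc z) = z. Proof. by case: z. Qed.
Lemma ucK z : uc (cc z) = z. Proof. by case: z. Qed.

Lemma conjCE (x : R[i]) : (x^*)%R = conjc x.
Proof.
have rC : forall a : R, conjC (a%:C)%C = (a%:C)%C.
  by move=> a; apply/CrealP; rewrite complex_real.
rewrite {1}(complexE x) rmorphD rmorphM /= conjCi !rC.
by case: x => a b; apply/eqP; rewrite eq_complex /=; simpc.
Qed.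

Lemma cc_add z w : cc (Cadd z w) = cc z + cc w.
Proof. by case: z; case: w. Qed.
Lemma cc_mul z w : cc (Cmul z w) = cc z * cc w.
Proof. by case: z; case: w. Qed.
Lemma cc_conj z : cc (Cconj z) = (cc z)^*.
Proof. by rewrite conjCE; case: z. Qed.
Lemma cc0 : cc Defs.C0 = 0. Proof. by []. Qed.
Lemma cc1 : cc Defs.C1 = 1. Proof. by []. Qed.
Lemma ccR a : cc (RtoC a) = (a%:C)%C. Proof. by []. Qed.
Lemma cc_sum k f : cc (csum k f) = \sum_(i < k) cc (f i).
Proof. elim: k => [|k IH]; first by rewrite big_ord0.
by rewrite big_ord_recr /= cc_add IH. Qed.
Lemma rsumE k f : rsum k f = \sum_(i < k) f i.
Proof. elim: k => [|k IH]; first by rewrite big_ord0.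
by rewrite big_ord_recr /= IH. Qed.
Lemma ReE z : Defs.Re z = complex.Re (cc z). Proof. by []. Qed.
Definition sesq m (A : Mat) (w1 w2 : nat -> R[i]) : R[i] :=
  \sum_(i < m) \sum_(j < m) (w1 i)^* * cc (A i j) * w2 j.

Lemma cc_inner m v w : cc (inner m v w) = \sum_(i<m) (cc (v i))^* * cc (w i).
Proof. by rewrite /inner cc_sum; apply: eq_bigr => i _; rewrite cc_mul cc_conj. Qed.

Lemma psd_quad m A : psd m A -> forall w, 0 <= sesq m A w w.
Proof.
move=> H w; have [h1 h2] := H (fun i => uc (w i)).
set q := inner _ _ _ in h1 h2.
have E : cc q = sesq m A w w.
  rewrite /q cc_inner /sesq; apply: eq_bigr => i _.
  rewrite ccK cc_sum mulr_sumr; apply: eq_bigr => j _.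
  by rewrite cc_mul ccK mulrA.
rewrite -E lecE /=; apply/andP; split; first by apply/eqP; rewrite h1.
by apply/RleP.
Qed.

Lemma sesqDl m A x y z :
  sesq m A (fun k => x k + y k) z = sesq m A x z + sesq m A y z.
Proof.
rewrite /sesq -big_split; apply: eq_bigr => i _; rewrite -big_split.
by apply: eq_bigr => j _; rewrite rmorphD /= !mulrDl.
Qed.

Lemma sesqDr m A x y z :
  sesq m A x (fun k => y k + z k) = sesq m A x y + sesq m A x z.
Proof.
rewrite /sesq -big_split; apply: eq_bigr => i _; rewrite -big_split.
by apply: eq_bigr => j _; rewrite !mulrDr.
Qed.

Definition ev (a : nat) (c : R[i]) : nat -> R[i] := fun k => if k == a then c else 0.

Lemma sum_delta m a (F : nat -> R[i]) : (a < m)%N ->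
  \sum_(i < m) (if (i : nat) == a then F i else 0) = F a.
Proof.
move=> Ha; rewrite (bigD1 (Ordinal Ha)) //= eqxx big1 ?addr0 // => i.
by move=> /eqP Hi; case: eqP => // Ei; case: Hi; apply: val_inj.
Qed.

Lemma sesq_ev m A a b c1 c2 : (a < m)%N -> (b < m)%N ->
  sesq m A (ev a c1) (ev b c2) = c1^* * cc (A a b) * c2.
Proof.
move=> Ha Hb; rewrite /sesq.
rewrite (eq_bigr (fun i : 'I_m => if (i:nat) == a then c1^* * cc (A a b) * c2 else 0)).
  by rewrite (@sum_delta m a (fun _ => c1^* * cc (A a b) * c2)).
move=> i _; rewrite /ev; case: eqP => [->|_].
  rewrite (eq_bigr (fun j : 'I_m => if (j:nat) == b then c1^* * cc (A a b) * c2 else 0)).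
    by rewrite (@sum_delta m b (fun _ => c1^* * cc (A a b) * c2)).
  by move=> j _; case: eqP => [->|_]; rewrite ?mulr0.
by rewrite big1 // => j _; rewrite rmorph0 !mul0r.
Qed.

Lemma psd_herm m A : psd m A -> forall a b, (a < m)%N -> (b < m)%N ->
  cc (A b a) = (cc (A a b))^*.
Proof.
move=> H a b Ha Hb.
have Hq := psd_quad _ _ H.
have Hr : forall w, (sesq m A w w)^* = sesq m A w w.
  by move=> w; apply/conj_Creal/ger0_real.
have Ea : (cc (A a a))^* = cc (A a a).
  by have := Hr (ev a 1); rewrite sesq_ev // rmorph1 mul1r mulr1.
have Eb : (cc (A b b))^* = cc (A b b).
  by have := Hr (ev b 1); rewrite sesq_ev // rmorph1 mul1r mulr1.
have Q c : sesq m A (fun k => ev a 1 k + ev b c k) (fun k => ev a 1 k + ev b c k)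
   = cc (A a a) + cc (A a b) * c + c^* * cc (A b a) + c^* * cc (A b b) * c.
  by rewrite sesqDl !sesqDr !sesq_ev // rmorph1 !mul1r !mulr1 !addrA.
have H1 := Hr (fun k => ev a 1 k + ev b 1 k).
have H2 := Hr (fun k => ev a 1 k + ev b 'i k).
rewrite Q rmorph1 !mulr1 !mul1r !rmorphD /= Ea Eb in H1.
rewrite Q !rmorphD !rmorphM /= conjCi Ea Eb rmorphN /= conjCi opprK in H2.
set x := cc (A a b) in H1 H2 *; set y := cc (A b a) in H1 H2 *.
set aa := cc (A a a) in H1 H2; set bb := cc (A b b) in H1 H2.
have Hii : 'i * 'i = -1 :> R[i] by rewrite -expr2 sqrCi.
have key : ((1 + 1) : R[i]) * (y^* - x) =
  ((aa + x^* + y^* + bb) - (aa + x + y + bb))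
  - ((aa + x^* * - 'i + 'i * y^* + 'i * bb * - 'i)
     - (aa + x * 'i + - 'i * y + - 'i * bb * 'i)) * 'i
  - (x^* - y^* + x - y) * ('i * 'i + 1).
  by ring.
rewrite H1 H2 Hii !subrr addNr mulr0 mul0r subrr in key.
move/eqP: key; rewrite subrr mulf_eq0 (_ : 1 + 1 = 2%:R) // pnatr_eq0 /= subr_eq0 => /eqP <-.

by rewrite conjCK.
Qed.
Lemma cc_inj z w : cc z = cc w -> z = w.
Proof. by move=> H; rewrite -(ucK z) H ucK. Qed.

Lemma cc_if (b : bool) : cc (if b then Defs.C1 else Defs.C0) = (b%:R : R[i]).
Proof. by case: b. Qed.

Definition toM m' (A : Mat) : 'M[R[i]]_m'.+1 := \matrix_(i, j) cc (A i j).

Lemma spectral_exists m' A : psd m'.+1 A ->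
  exists mu v, spectral_decomp m'.+1 A mu v.
Proof.
move=> H; set M := toM m' A.
have Hh : M \is hermsymmx.
  apply/is_hermitianmxP; rewrite expr0 scale1r; apply/matrixP => i j.
  by rewrite !mxE (psd_herm _ _ H).
have Hn := hermitian_normalmx Hh.
have /orthomx_spectralP E := Hn.
have Hreal := hermitian_spectral_diag_real Hh.
set P := spectralmx M in E; set d := spectral_diag M in E Hreal.
have HU : P \is unitarymx by apply: spectral_unitarymx.
rewrite invmx_unitary // in E.
have /unitarymxP HPP := HU.
exists (fun k => complex.Re (d 0 (inord k))).
exists (fun k i => uc ((P (inord k) (inord i))^*)).
split.
- move=> k l /ssrnat.ltP Hk /ssrnat.ltP Hl; apply: cc_inj; rewrite cc_inner cc_if.
  have := congr1 (fun X : 'M[R[i]]_m'.+1 => X (inord k) (inord l)) HPP.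
  rewrite !mxE /= => E2.
  have Ekl : (inord k == inord l :> 'I_m'.+1) = (Nat.eqb k l).
    case: (PeanoNat.Nat.eqb_spec k l) => [->|Hne]; first by rewrite eqxx.
    apply/negbTE/eqP => Heq; apply: Hne.
    by rewrite -(@inordK m' k) // -(@inordK m' l) // Heq.
  rewrite -Ekl -E2; apply: eq_bigr => i _.
  by rewrite !ccK !inord_val conjCK !mxE.
- move=> i j /ssrnat.ltP Hi /ssrnat.ltP Hj; apply: cc_inj.
  have := congr1 (fun X : 'M[R[i]]_m'.+1 => X (inord i) (inord j)) E.
  rewrite !mxE !inordK // => ->; rewrite cc_sum.
  rewrite mul_mx_diag; apply: eq_bigr => k _.
  rewrite !mxE !cc_mul ccR cc_conj !ccK conjCK !inord_val.
  have /mxOverP/(_ 0 k) Hk := Hreal.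
  rewrite RRe_real //; ring.
Qed.
Definition vc (v : nat -> Vec) (k : nat) : nat -> R[i] := fun i => cc (v k i).

Lemma ReD (x y : R[i]) : complex.Re (x + y) = complex.Re x + complex.Re y.
Proof. by case: x; case: y. Qed.

Lemma Re_sum (I : Type) (r : seq I) (F : I -> R[i]) :
  complex.Re (\sum_(i <- r) F i) = \sum_(i <- r) complex.Re (F i).
Proof.
elim: r => [|a r IH]; first by rewrite !big_nil.
by rewrite !big_cons ReD IH.
Qed.

Lemma Re_scale (a : R) (z : R[i]) : complex.Re ((a%:C)%C * z) = a * complex.Re z.
Proof. by case: z => x y /=; rewrite mul0r subr0. Qed.

Definition lnp (x : R) : R := if Rlt_dec 0 x then ln x else 0.

Lemma trlog_formula m B : (exists mu v, spectral_decomp m B mu v) ->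
  exists mu v, spectral_decomp m B mu v /\ forall X, trlog m X B =
    \sum_(k < m) lnp (mu k) * complex.Re (sesq m X (vc v k) (vc v k)).
Proof.
move=> Hex; rewrite /trlog /mlog.
case: (excluded_middle_informative _) => [H|//].
set d := proj1_sig _.
have Hd : spectral_decomp m B (fst d) (snd d) by exact: (proj2_sig (constructive_indefinite_description _ H)).
exists (fst d), (snd d); split => // X.
rewrite ReE /mtrace cc_sum.
rewrite (eq_bigr (fun i : 'I_m => \sum_(j < m) cc (X i j) *
   \sum_(k < m) ((lnp (fst d k))%:C)%C * (cc (snd d k j) * (cc (snd d k i))^*))).
  set c := fun k => ((lnp (fst d k))%:C)%C.
  have -> : \sum_(i < m) \sum_(j < m) cc (X i j) * \sum_(k < m) c k * (cc (snd d k j) * (cc (snd d k i))^*)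
     = \sum_(k < m) c k * sesq m X (vc (snd d) k) (vc (snd d) k).
    rewrite /sesq.
    under eq_bigr => i _ do under eq_bigr => j _ do rewrite mulr_sumr.
    under eq_bigr => i _ do rewrite exchange_big.
    rewrite exchange_big; apply: eq_bigr => k _.
    rewrite mulr_sumr; apply: eq_bigr => i _.
    rewrite mulr_sumr; apply: eq_bigr => j _.
    by rewrite /vc; ring.
  by rewrite Re_sum; apply: eq_bigr => k _; rewrite Re_scale.
move=> i _; rewrite /mmul cc_sum; apply: eq_bigr => j _.
rewrite cc_mul cc_sum; congr (_ * _); apply: eq_bigr => k _.
rewrite /lnp; destruct (Rlt_dec 0 (fst d k)).
  by rewrite cc_mul ccR cc_mul cc_conj.
by rewrite cc0 mul0r.
move=> Hn; exfalso; apply: Hn; case: Hex => mu [v Hv]; by exists (mu, v).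
Qed.
Local Close Scope ring_scope.
Local Open Scope R_scope.
Lemma key_ineq l u : 0 < l -> 0 < u -> l - u <= l * (ln l - ln u).
Proof.
move=> Hl Hu.
have H := exp_ineq1_le (ln u - ln l).
rewrite exp_plus exp_Ropp !exp_ln // in H.
have H2 : l * (1 + (ln u - ln l)) <= l * (u * / l) by apply Rmult_le_compat_l; lra.
have E : l * (u * / l) = u by rewrite (Rmult_comm u) -Rmult_assoc Rinv_r ?Rmult_1_l //; lra.
lra.
Qed.
Lemma term_ineq l u P : 0 <= l -> 0 <= u -> 0 <= P -> (0 < l -> u = 0 -> P = 0) ->
  P * (l - u) <= P * l * lnp l - lnp u * (l * P).
Proof.
move=> Hl Hu HP Hs; rewrite /lnp.
destruct (Rlt_dec 0 l) as [Hl'|Hl'].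
- destruct (Rlt_dec 0 u) as [Hu'|Hu'].
  + have K := key_ineq _ _ Hl' Hu'.
    have K2 := Rmult_le_compat_l P _ _ HP K. apply: Rle_trans K2 _; right; rewrite !RmultE !RminusE; ring.
  + have Hu0 : u = 0 by lra. rewrite (Hs Hl' Hu0). lra.
- have Hl0 : l = 0 by lra. subst l.
  destruct (Rlt_dec 0 u); nra.
Qed.
Local Close Scope R_scope.
Local Open Scope ring_scope.

Lemma klein m (lam mu : nat -> R) (P : nat -> nat -> R) :
 (forall i : 'I_m, 0 <= lam i) -> (forall k : 'I_m, 0 <= mu k) ->
 (forall (i k : 'I_m), 0 <= P i k) ->
 (forall i : 'I_m, \sum_(k < m) P i k = 1) -> (forall k : 'I_m, \sum_(i < m) P i k = 1) ->
 \sum_(i < m) lam i = 1 -> \sum_(k < m) mu k = 1 ->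
 (forall k : 'I_m, mu k = 0 -> \sum_(i < m) lam i * P i k = 0) ->
 \sum_(k < m) lnp (mu k) * \sum_(i < m) lam i * P i k <= \sum_(i < m) lnp (lam i) * lam i.
Proof.
move=> Hl Hu HP Hr Hc Sl Su Hs.
have E1 : \sum_(i < m) lnp (lam i) * lam i = \sum_(i < m) \sum_(k < m) P i k * lam i * lnp (lam i).
  by apply: eq_bigr => i _; rewrite -mulr_suml -mulr_suml Hr mul1r mulrC.
have E2 : \sum_(k < m) lnp (mu k) * \sum_(i < m) lam i * P i k =
    \sum_(i < m) \sum_(k < m) lnp (mu k) * (lam i * P i k).
  rewrite exchange_big /=; apply: eq_bigr => k _; by rewrite mulr_sumr.
have E3 : \sum_(i < m) \sum_(k < m) P i k * (lam i - mu k) = 0.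
  under eq_bigr => i _ do under eq_bigr => k _ do rewrite mulrBr.
  under eq_bigr => i _ do rewrite sumrB.
  rewrite sumrB [X in _ - X]exchange_big /=.
  rewrite (eq_bigr (fun i : 'I_m => lam i)); last first.
    by move=> i _; rewrite -mulr_suml Hr mul1r.
  rewrite [X in _ - X](eq_bigr (fun k : 'I_m => mu k)); last first.
    by move=> k _; rewrite -mulr_suml Hc mul1r.
  by rewrite Sl Su subrr.
rewrite -subr_ge0 E1 E2 -sumrB -[X in X <= _]E3; apply: ler_sum => i _.
rewrite -sumrB; apply: ler_sum => k _.
apply/RleP; apply: term_ineq.
- exact/RleP.
- exact/RleP.
- exact/RleP.
move=> /RltP Hli Hmu.
have := Hs k Hmu.
move/psumr_eq0P => H0.
have /eqP := H0 (fun j _ => mulr_ge0 (Hl j) (HP j k)) i isT.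
rewrite mulf_eq0 => /orP [/eqP Hz|/eqP //].
by rewrite Hz ltxx in Hli.
Qed.
Local Open Scope ring_scope.
Definition ip m (u w : nat -> R[i]) : R[i] := \sum_(i < m) (u i)^* * w i.
Definition nsq (z : R[i]) : R := complex.Re z ^+ 2 + complex.Im z ^+ 2.

Lemma nsqE z : z^* * z = ((nsq z)%:C)%C.
Proof. rewrite conjCE; case: z => a b; apply/eqP; rewrite eq_complex /= /nsq.
apply/andP; split; apply/eqP; rewrite /=.
  by rewrite !expr2 mulNr opprK.
by rewrite mulNr mulrC subrr. Qed.

Lemma nsq_ge0 z : 0 <= nsq z.
Proof. by rewrite /nsq addr_ge0 // sqr_ge0. Qed.

Lemma nsq_conj z : nsq z^* = nsq z.
Proof. by rewrite conjCE; case: z => a b; rewrite /nsq /= sqrrN. Qed.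

Lemma ip_conj m u w : (ip m u w)^* = ip m w u.
Proof. rewrite /ip rmorph_sum; apply: eq_bigr => i _.
by rewrite rmorphM /= conjCK mulrC. Qed.

Lemma realC_sum (I : Type) (r : seq I) (F : I -> R) :
  ((\sum_(i <- r) F i)%:C)%C = \sum_(i <- r) ((F i)%:C)%C.
Proof. by rewrite rmorph_sum. Qed.

Lemma spec_entry m B mu v : spectral_decomp m B mu v -> forall i j : 'I_m,
  cc (B i j) = \sum_(k < m) ((mu k)%:C)%C * (vc v k i * (vc v k j)^*).
Proof.
move=> [_ H] i j; rewrite H; try exact/ssrnat.ltP.
rewrite cc_sum; apply: eq_bigr => k _; by rewrite !cc_mul ccR cc_conj.
Qed.
Arguments spec_entry {m B mu v}.

Lemma sesq_decomp m B mu v : spectral_decomp m B mu v -> forall w1 w2,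
  sesq m B w1 w2 = \sum_(k < m) ((mu k)%:C)%C * ((ip m (vc v k) w1)^* * ip m (vc v k) w2).
Proof.
move=> Hd w1 w2; rewrite /sesq.
under eq_bigr => i _ do under eq_bigr => j _ do rewrite (spec_entry Hd) mulr_sumr mulr_suml.
under eq_bigr => i _ do rewrite exchange_big.
rewrite exchange_big; apply: eq_bigr => k _.
rewrite ip_conj /ip mulr_suml mulr_sumr; apply: eq_bigr => i _.
rewrite mulr_sumr mulr_sumr; apply: eq_bigr => j _.
ring.
Qed.
Arguments sesq_decomp {m B mu v}.

Lemma spec_orth m B mu v : spectral_decomp m B mu v -> forall k l : 'I_m,
  ip m (vc v k) (vc v l) = ((k == l)%:R : R[i]).
Proof.
move=> [H _] k l; have := H k l (ssrnat.ltP (ltn_ord k)) (ssrnat.ltP (ltn_ord l)).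
move/(congr1 cc); rewrite cc_inner cc_if /ip /vc => ->.
by congr (_%:R).
Qed.
Arguments spec_orth {m B mu v}.

Lemma spec_compl m B mu v : spectral_decomp m B mu v -> forall i j : 'I_m,
  \sum_(k < m) vc v k i * (vc v k j)^* = ((i == j)%:R : R[i]).
Proof.
move=> Hd i j.
set W : 'M[R[i]]_m := \matrix_(k, i) (vc v k i)^*.
have HW : W \is unitarymx.
  apply/unitarymxP; apply/matrixP => k l; rewrite !mxE.
  rewrite -(spec_orth Hd) /ip; apply: eq_bigr => x _; rewrite !mxE conjCK mulrC //.
have HU := unitarymx_unit HW.
have E : (W ^t* *m W)%sesqui = 1%:M by rewrite -invmx_unitary // mulVmx.
have := congr1 (fun X : 'M[R[i]]_m => X i j) E; rewrite !mxE => <-.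
by apply: eq_bigr => k _; rewrite !mxE conjCK.
Qed.
Arguments spec_compl {m B mu v}.

Lemma parseval m B mu v : spectral_decomp m B mu v -> forall w,
  \sum_(k < m) nsq (ip m (vc v k) w) = \sum_(i < m) nsq (w i).
Proof.
move=> Hd w; apply: complexI; rewrite !realC_sum.
under eq_bigr => k _ do rewrite -nsqE.
under [RHS]eq_bigr => k _ do rewrite -nsqE.
rewrite (eq_bigr (fun k : 'I_m => \sum_(i < m) \sum_(j < m)
   (w i)^* * w j * (vc v k i * (vc v k j)^*))); last first.
  move=> k _; rewrite ip_conj /ip mulr_suml; apply: eq_bigr => i _.
  rewrite mulr_sumr; apply: eq_bigr => j _; ring.
rewrite exchange_big; apply: eq_bigr => i _.
rewrite exchange_big /= (bigD1 i) //= [X in _ + X]big1.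
  by rewrite addr0 -mulr_sumr (spec_compl Hd) eqxx mulr1.
move=> j Hj; rewrite -mulr_sumr (spec_compl Hd).
by rewrite eq_sym (negbTE Hj) mulr0.
Qed.
Arguments parseval {m B mu v}.

Lemma Re_real (a : R) : complex.Re ((a%:C)%C) = a. Proof. by []. Qed.

Lemma Re_sesq m B mu v : spectral_decomp m B mu v -> forall w,
  complex.Re (sesq m B w w) = \sum_(k < m) mu k * nsq (ip m (vc v k) w).
Proof.
move=> Hd w; rewrite (sesq_decomp Hd).
under eq_bigr => k _ do rewrite nsqE -rmorphM.
by rewrite -realC_sum.
Qed.
Arguments Re_sesq {m B mu v}.

Lemma nsq_nat (b : bool) : nsq (b%:R) = b%:R.
Proof. by case: b; rewrite /nsq /= !expr2 ?mul1r !mul0r RplusE addr0. Qed.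

Lemma spec_eig m B mu v : spectral_decomp m B mu v -> forall l : 'I_m,
  complex.Re (sesq m B (vc v l) (vc v l)) = mu l.
Proof.
move=> Hd l; rewrite (Re_sesq Hd).
under eq_bigr => k _ do rewrite (spec_orth Hd) nsq_nat.
rewrite (bigD1 l) //= eqxx mulr1 big1 ?addr0 //.
by move=> k /negbTE ->; rewrite mulr0.
Qed.
Arguments spec_eig {m B mu v}.

Lemma spec_trace m B mu v : spectral_decomp m B mu v ->
  complex.Re (cc (mtrace m B)) = \sum_(k < m) mu k.
Proof.
move=> Hd; rewrite /mtrace cc_sum.
under eq_bigr => i _ do rewrite (spec_entry Hd).
rewrite exchange_big /=.
rewrite (eq_bigr (fun k : 'I_m => ((mu k)%:C)%C)); first by rewrite -realC_sum.
move=> k _; rewrite -mulr_sumr.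
have := spec_orth Hd k k; rewrite eqxx /ip => E.
rewrite (eq_bigr (fun i : 'I_m => (vc v k i)^* * vc v k i)) ?E ?mulr1 //.
by move=> i _; rewrite mulrC.
Qed.
Arguments spec_trace {m B mu v}.

Lemma cc_psdq m A v :
  cc (inner m v (fun i => csum m (fun j => Cmul (A i j) (v j)))) =
  sesq m A (fun i => cc (v i)) (fun i => cc (v i)).
Proof.
rewrite cc_inner /sesq; apply: eq_bigr => i _.
rewrite cc_sum mulr_sumr; apply: eq_bigr => j _.
by rewrite cc_mul mulrA.
Qed.

Lemma psd_of_sesq m A : (forall w, 0 <= sesq m A w w) -> psd m A.
Proof.
move=> H v /=; have := H (fun i => cc (v i)); rewrite -cc_psdq lecE /=.
by case/andP => /eqP -> /RleP.
Qed.

Lemma sesq_rho n m rhos p w1 w2 :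
  sesq m (rho_of n m rhos p) w1 w2 = \sum_(x < n) ((p x)%:C)%C * sesq m (rhos x) w1 w2.
Proof.
rewrite /sesq /rho_of.
under eq_bigr => i _ do under eq_bigr => j _ do rewrite cc_sum mulr_sumr mulr_suml.
under eq_bigr => i _ do rewrite exchange_big.
rewrite exchange_big; apply: eq_bigr => x _.
rewrite mulr_sumr; apply: eq_bigr => i _.
rewrite mulr_sumr; apply: eq_bigr => j _.
rewrite cc_mul ccR; ring.
Qed.

Lemma trace_rho n m rhos p :
  cc (mtrace m (rho_of n m rhos p)) = \sum_(x < n) ((p x)%:C)%C * cc (mtrace m (rhos x)).
Proof.
rewrite /mtrace /rho_of !cc_sum.
under eq_bigr => i _ do rewrite cc_sum.
rewrite exchange_big; apply: eq_bigr => x _.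
rewrite cc_sum mulr_sumr; apply: eq_bigr => i _.
by rewrite cc_mul ccR.
Qed.

Lemma Re_sum_scale (I : Type) (r : seq I) (a : I -> R) (F : I -> R[i]) :
  complex.Re (\sum_(i <- r) ((a i)%:C)%C * F i) = \sum_(i <- r) a i * complex.Re (F i).
Proof. rewrite Re_sum; apply: eq_bigr => i _; exact: Re_scale. Qed.
Local Open Scope ring_scope.
Lemma Re_sesq_ge0 m A w : psd m A -> 0 <= complex.Re (sesq m A w w).
Proof. by move=> H; have := psd_quad _ _ H w; rewrite lecE => /andP []. Qed.

Lemma psd_rho n m rhos p : (forall x, (x < n)%coq_nat -> psd m (rhos x)) ->
  (forall x, (x < n)%coq_nat -> (0 <= p x)%R) -> psd m (rho_of n m rhos p).
Proof.
move=> Hr Hp; apply: psd_of_sesq => w; rewrite sesq_rho.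
apply: sumr_ge0 => x _; apply: mulr_ge0.
  by rewrite ler0c; apply: Hp; apply/ssrnat.ltP.
by apply: psd_quad; apply: Hr; apply/ssrnat.ltP.
Qed.

Lemma sumnsq m (w : nat -> R[i]) : \sum_(j < m) nsq (w j) = complex.Re (ip m w w).
Proof.
rewrite /ip Re_sum; apply: eq_bigr => j _; by rewrite nsqE.
Qed.

Lemma trace_one n m rhos p : (forall x, (x < n)%coq_nat -> density m (rhos x)) ->
  complex.Re (cc (mtrace m (rho_of n m rhos p))) = \sum_(x < n) p x.
Proof.
move=> H; rewrite trace_rho Re_sum_scale; apply: eq_bigr => x _.
have [_ ->] := H x (ssrnat.ltP (ltn_ord x)).
by rewrite mulr1.
Qed.

Lemma key_K n m' rhos (p q : nat -> R) :
 (forall x, (x < n)%coq_nat -> density m'.+1 (rhos x)) ->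
 (forall x, (x < n)%coq_nat -> 0 <= p x) -> \sum_(x < n) p x = 1 ->
 (forall x, (x < n)%coq_nat -> 0 < q x) -> \sum_(x < n) q x = 1 ->
 \sum_(x < n) p x * trlog m'.+1 (rhos x) (rho_of n m'.+1 rhos q)
   <= trlog m'.+1 (rho_of n m'.+1 rhos p) (rho_of n m'.+1 rhos p).
Proof.
move=> Hd Hp Sp Hq Sq.
have Hps : forall x, (x < n)%coq_nat -> psd m'.+1 (rhos x) by move=> x Hx; case: (Hd x Hx).
have HA := psd_rho _ _ _ _ Hps Hp.
have HB : psd m'.+1 (rho_of n m'.+1 rhos q).
  by apply: psd_rho => // x Hx; apply: ltW; apply: Hq.
have [lam [u [Hu FA]]] := trlog_formula _ _ (spectral_exists _ _ HA).
have [mu [v [Hv FB]]] := trlog_formula _ _ (spectral_exists _ _ HB).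
rewrite FA.
have -> : \sum_(x < n) p x * trlog m'.+1 (rhos x) (rho_of n m'.+1 rhos q) =
  \sum_(k < m'.+1) lnp (mu k) * complex.Re (sesq m'.+1 (rho_of n m'.+1 rhos p) (vc v k) (vc v k)).
  under eq_bigr => x _ do rewrite FB mulr_sumr.
  rewrite exchange_big; apply: eq_bigr => k _ /=.
  rewrite sesq_rho Re_sum_scale mulr_sumr; apply: eq_bigr => x _; ring.
under [X in _ <= X]eq_bigr => i _ do rewrite (spec_eig Hu).
under [X in X <= _]eq_bigr => k _ do rewrite (Re_sesq Hu).
apply: (@klein m'.+1 lam mu (fun i k => nsq (ip m'.+1 (vc u i) (vc v k)))).
- by move=> i; rewrite -(spec_eig Hu i); apply: Re_sesq_ge0.
- by move=> k; rewrite -(spec_eig Hv k); apply: Re_sesq_ge0.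
- by move=> i k; apply: nsq_ge0.
- move=> i; under eq_bigr => k _ do rewrite -nsq_conj ip_conj.
  by rewrite (parseval Hv) sumnsq (spec_orth Hu) eqxx.
- by move=> k; rewrite (parseval Hu) sumnsq (spec_orth Hv) eqxx.
- by rewrite -(spec_trace Hu) trace_one.
- by rewrite -(spec_trace Hv) trace_one.
move=> k Hk0.
rewrite -(Re_sesq Hu) sesq_rho Re_sum_scale big1 // => x _.
have := spec_eig Hv k; rewrite Hk0 sesq_rho Re_sum_scale.
move/eqP; rewrite psumr_eq0.
  move=> /allP /(_ x (mem_index_enum x)) /eqP.
  have Hqx := Hq x (ssrnat.ltP (ltn_ord x)).
  move/eqP; rewrite mulf_eq0 => /orP [/eqP Hz|/eqP ->]; last by rewrite mulr0.
  by move: Hqx; rewrite Hz ltxx.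
move=> y _; apply: mulr_ge0.
  by apply: ltW; apply: Hq; apply/ssrnat.ltP.
apply: Re_sesq_ge0; apply: Hps; apply/ssrnat.ltP; exact: ltn_ord.
Qed.
Local Close Scope ring_scope.
Local Open Scope R_scope.
Lemma rsum_ext k f g : (forall x, (x < k)%coq_nat -> f x = g x) -> rsum k f = rsum k g.
Proof.
elim: k => [//|k IH] H /=; rewrite IH ?H //; try lia.
move=> x Hx; apply: H; lia.
Qed.

Lemma rsum_add k f g : rsum k (fun x => f x + g x) = rsum k f + rsum k g.
Proof. elim: k => [/=|k IH /=]; [lra|rewrite IH; lra]. Qed.
Lemma rsum_sub k f g : rsum k (fun x => f x - g x) = rsum k f - rsum k g.
Proof. elim: k => [/=|k IH /=]; [lra|rewrite IH; lra]. Qed.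
Lemma rsum_scal k c f : rsum k (fun x => c * f x) = c * rsum k f.
Proof. elim: k => [/=|k IH /=]; [lra|rewrite IH; lra]. Qed.
Lemma rsum_pos k f : (0 < k)%coq_nat -> (forall x, (x < k)%coq_nat -> 0 < f x) -> 0 < rsum k f.
Proof.
elim: k => [|k IH] Hk H /=; first lia.
destruct k as [|k].
  simpl; have := H 0%nat ltac:(lia); lra.
have := IH ltac:(lia) (fun x Hx => H x ltac:(lia)).
have := H (S k) ltac:(lia); lra.
Qed.
Lemma rsum_const k c : rsum k (fun _ => c) = INR k * c.
Proof. elim: k => [/=|k IH]; first lra.
change (rsum k.+1 (fun _ => c)) with (rsum k (fun _ => c) + c); rewrite IH S_INR; lra. Qed.

Definition rr n m rhos s lam (q : nat -> R) : nat -> R := fun x =>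
  exp (ln (q x) + trlog m (rhos x) (rhos x)
        - trlog m (rhos x) (rho_of n m rhos q) - lam * s x).

Lemma BA_S n m rhos s lam t :
  BA n m rhos s lam (S t) =
  (fun x => rr n m rhos s lam (BA n m rhos s lam t) x /
            rsum n (rr n m rhos s lam (BA n m rhos s lam t))).
Proof. by []. Qed.

Lemma Z_pos n m rhos s lam q : (1 <= n)%coq_nat -> 0 < rsum n (rr n m rhos s lam q).
Proof. move=> Hn; apply: rsum_pos; first lia. move=> x _; exact: exp_pos. Qed.

Lemma BA_pos n m rhos s lam t : (1 <= n)%coq_nat ->
  forall x, (x < n)%coq_nat -> 0 < BA n m rhos s lam t x.
Proof.
move=> Hn x Hx; case: t => [|t].
  rewrite /= /Rdiv Rmult_1_l; apply: Rinv_0_lt_compat; apply: lt_0_INR; lia.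
rewrite BA_S /Rdiv; apply: Rmult_lt_0_compat; first exact: exp_pos.
by apply: Rinv_0_lt_compat; apply: Z_pos.
Qed.

Lemma BA_sum n m rhos s lam t : (1 <= n)%coq_nat -> rsum n (BA n m rhos s lam t) = 1.
Proof.
move=> Hn; case: t => [|t].
  rewrite /= rsum_const /Rdiv Rmult_1_l Rinv_r //; apply: not_0_INR; lia.
rewrite BA_S.
rewrite (@rsum_ext n _ (fun x => / rsum n (rr n m rhos s lam (BA n m rhos s lam t)) *
                                 rr n m rhos s lam (BA n m rhos s lam t) x)).
  rewrite rsum_scal Rinv_l //; have := Z_pos n m rhos s lam (BA n m rhos s lam t) Hn; lra.
by move=> x _; rewrite /Rdiv Rmult_comm.
Qed.

Lemma ln_ratio n m rhos s lam t x : (1 <= n)%coq_nat -> (x < n)%coq_nat ->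
  ln (BA n m rhos s lam (S t) x / BA n m rhos s lam t x) =
  trlog m (rhos x) (rhos x) - trlog m (rhos x) (rho_of n m rhos (BA n m rhos s lam t))
  - lam * s x - ln (rsum n (rr n m rhos s lam (BA n m rhos s lam t))).
Proof.
move=> Hn Hx.
have Hq := BA_pos n m rhos s lam t Hn x Hx.
have HZ := Z_pos n m rhos s lam (BA n m rhos s lam t) Hn.
rewrite BA_S /Rdiv ln_mult; last by apply: Rinv_0_lt_compat.
  rewrite ln_mult ?ln_Rinv // /rr ?ln_exp; try lra.
    exact: exp_pos.
  by apply: Rinv_0_lt_compat.
apply: Rmult_lt_0_compat; first exact: exp_pos.
by apply: Rinv_0_lt_compat.
Qed.

Lemma f_value n m rhos s lam t : (1 <= n)%coq_nat ->
  f_lambda n m rhos s lam (BA n m rhos s lam (S t)) (BA n m rhos s lam t) =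
  ln (rsum n (rr n m rhos s lam (BA n m rhos s lam t))).
Proof.
move=> Hn; rewrite /f_lambda.
set q := BA n m rhos s lam t; set q' := BA n m rhos s lam (S t).
set Z := rsum n (rr n m rhos s lam q).
rewrite (@rsum_ext n _ (fun x => lam * (s x * q' x) + ln Z * q' x)).
  rewrite rsum_add !rsum_scal /q' BA_sum //; lra.
move=> x Hx.
have Hq := BA_pos n m rhos s lam t Hn x Hx.
have Hq' := BA_pos n m rhos s lam (S t) Hn x Hx.
have E1 := ln_ratio n m rhos s lam t x Hn Hx.
have E2 : ln (q x / q' x) = - ln (q' x / q x).
  have Iq := Rinv_0_lt_compat _ Hq; have Iq' := Rinv_0_lt_compat _ Hq'.
  rewrite /Rdiv (ln_mult _ _ Hq Iq') (ln_mult _ _ Hq' Iq) (ln_Rinv _ Hq') (ln_Rinv _ Hq); lra.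
rewrite E2 /q' E1 -/q -/Z.
destruct (Req_dec_T _ _) as [E|_]; first by rewrite /q' in Hq'; lra.
lra.
Qed.

Lemma rhs_value n m rhos s lam t p : (1 <= n)%coq_nat -> rsum n p = 1 ->
  rsum n (fun x => p x * ln (BA n m rhos s lam (S t) x / BA n m rhos s lam t x)) =
  rsum n (fun x => p x * trlog m (rhos x) (rhos x))
  - rsum n (fun x => p x * trlog m (rhos x) (rho_of n m rhos (BA n m rhos s lam t)))
  - lam * rsum n (fun x => s x * p x)
  - ln (rsum n (rr n m rhos s lam (BA n m rhos s lam t))).
Proof.
move=> Hn Hp.
set Z := rsum n (rr n m rhos s lam (BA n m rhos s lam t)).
rewrite (@rsum_ext n _ (fun x => (p x * trlog m (rhos x) (rhos x)
  - p x * trlog m (rhos x) (rho_of n m rhos (BA n m rhos s lam t)))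
  - lam * (s x * p x) - ln Z * p x)).
  by rewrite !rsum_sub !rsum_scal Hp; lra.
move=> x Hx; rewrite ln_ratio // -/Z; lra.
Qed.

Lemma chi_value n m rhos p :
  chi n m rhos p = entropy m (rho_of n m rhos p) + rsum n (fun x => p x * trlog m (rhos x) (rhos x)).
Proof.
rewrite /chi /entropy.
rewrite (@rsum_ext n _ (fun x => -1 * (p x * trlog m (rhos x) (rhos x)))).
  rewrite rsum_scal; lra.
move=> x _; lra.
Qed.

Theorem corollary2 (n m : nat) (Hn : (1 <= n)%coq_nat) (Hm : (1 <= m)%coq_nat)
  (rhos : nat -> Mat) (Hrho : forall x, (x < n)%coq_nat -> density m (rhos x))
  (s : nat -> R) (Hs : forall x, (x < n)%coq_nat -> 0 <= s x)
  (lam : R) (Hlam : 0 <= lam) (t : nat) (p : nat -> R) (Hp : simplex n p) :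
  chi n m rhos p - lam * rsum n (fun x => s x * p x)
    - f_lambda n m rhos s lam (BA n m rhos s lam (S t)) (BA n m rhos s lam t)
  <= rsum n (fun x => p x * ln (BA n m rhos s lam (S t) x / BA n m rhos s lam t x)).
Proof.
destruct m as [|m']; first lia.
have [Hp0 Hp1] := Hp.
rewrite chi_value f_value // rhs_value //.
set q := BA n m'.+1 rhos s lam t.
have K : rsum n (fun x => p x * trlog m'.+1 (rhos x) (rho_of n m'.+1 rhos q))
   <= trlog m'.+1 (rho_of n m'.+1 rhos p) (rho_of n m'.+1 rhos p).
  have := @key_K n m' rhos p q Hrho.
  Local Open Scope ring_scope.
  have H1 : forall x, (x < n)%coq_nat -> 0 <= p x.
    by move=> x Hx; apply/RleP; exact: Hp0.
  have H2 : \sum_(x < n) p x = 1 by have := Hp1; rewrite rsumE.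
  have H3 : forall x, (x < n)%coq_nat -> 0 < q x.
    by move=> x Hx; apply/RltP; exact: BA_pos.
  have H4 : \sum_(x < n) q x = 1.
    by have := BA_sum n m'.+1 rhos s lam t Hn; rewrite rsumE.
  move=> /(_ H1 H2 H3 H4) HK; apply/RleP; rewrite rsumE; exact: HK.
  Local Close Scope ring_scope.
rewrite /entropy; lra.
Qed.
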